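(* Let $\varphi$ be an $\mathrm{FO}(A)$-sentence and $B\subseteq A$. (1) $\varphi$ is continuous in $B$ iff it is equivalent to a disjunction of sentences $\nabla^B_{\mathrm{FO}}(\Sigma,\Sigma^-_B)$ for sets of types $\Sigma\subseteq\wp(A)$, where $\Sigma^-_B:=\{S\in\Sigma: S\cap B=\varnothing\}$. (2) If $\varphi$ is monotone in $A$, then $\varphi$ is continuous in $B$ iff it is equivalent to a disjunction of sentences $\nabla^+_{\mathrm{FO}}(\Sigma,\Sigma^-_B)$ for $\Sigma\subseteq\wp(A)$.
   Context: Fix a finite set $A$ of unary predicate symbols. A monadic model is a pair $(D,V)$ with $D$ a set (possibly empty) and $V:A\to\wp(D)$. $\mathrm{FO}(A)$ is monadic first-order logic without equality over $A$ (negation normal form). On the empty model $\exists x.\varphi$ is false and $\forall x.\varphi$ true. $V\le_BV'$ means $V(b)\subseteq V'(b)$ for $b\in B$ and $V(a)=V'(a)$ for $a\notin B$; $\varphi$ is monotone in $B$ if truth is preserved along $\le_B$. $U\le^\omega_BV$ means $U\le_BV$ and each $U(b)$, $b\in B$, is finite; $\varphi$ is continuous in $B$ if it is monotone in $B$ and whenever $(D,V)\models\varphi$ there is $U\le^\omega_BV$ with $(D,U)\models\varphi$. $\tau^B_S(x):=\bigwedge_{a\in S}a(x)\wedge\bigwedge_{a\in A\setminus(S\cup B)}\neg a(x)$; empty conjunction $\top$, empty disjunction $\bot$. $\nabla^B_{\mathrm{FO}}(\Sigma,\Pi):=\bigwedge_{S\in\Sigma}\exists x.\tau^B_S(x)\wedge\forall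 x.\bigvee_{S\in\Pi}\tau^B_S(x)$ and $\nabla^+_{\mathrm{FO}}(\Sigma,\Pi):=\nabla^A_{\mathrm{FO}}(\Sigma,\Pi)$. *)

(* Defs.v *)
From Stdlib Require List.
From mathcomp Require Import all_boot.
Set Implicit Arguments. Unset Strict Implicit. Unset Printing Implicit Defensive.

Section Monadic.
Variable A : finType.

(* FO(A): monadic first-order logic without equality, negation normal form.
   Variables are de Bruijn indices. *)
Inductive form : Type :=
| FAtom : A -> nat -> form
| FNAtom : A -> nat -> form
| FTop : form
| FBot : form
| FAnd : form -> form -> form
| FOr : form -> form -> form
| FEx : form -> form
| FAll : form -> form.

Fixpoint bound_by (n : nat) (f : form) : Prop :=
  match f with
  | FAtom _ i | FNAtom _ i => (i < n)%N
  | FTop | FBot => True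
  | FAnd g h | FOr g h => bound_by n g /\ bound_by n h
  | FEx g | FAll g => bound_by n.+1 g
  end.

Definition sentence (f : form) : Prop := bound_by 0 f.

(* A monadic model (D, V): D any type (possibly empty), V : A -> subsets of D. *)
Fixpoint sat (D : Type) (V : A -> D -> Prop) (env : list D) (f : form) : Prop :=
  match f with
  | FAtom a i => match List.nth_error env i with Some d => V a d | None => False end
  | FNAtom a i => match List.nth_error env i with Some d => ~ V a d | None => False end
  | FTop => True
  | FBot => False
  | FAnd g h => sat V env g /\ sat V env h
  | FOr g h => sat V env g \/ sat V env h
  | FEx g => exists d : D, sat V (d :: env) g
  | FAll g => forall d : D, sat V (d :: env) g
  end.

Definition models (D : Type) (V : A -> D -> Prop) (f : form) : Prop := sat V nil f.

Definition leB (B : {set A}) (D : Type) (V V' : A -> D -> Prop) : Prop :=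
  (forall b, b \in B -> forall d, V b d -> V' b d) /\
  (forall a, a \notin B -> forall d, V a d <-> V' a d).

Definition finite_subset (D : Type) (X : D -> Prop) : Prop :=
  exists l : list D, forall d, X d -> List.In d l.

Definition leB_fin (B : {set A}) (D : Type) (U V : A -> D -> Prop) : Prop :=
  leB B U V /\ forall b, b \in B -> finite_subset (U b).

Definition monotone_in (B : {set A}) (f : form) : Prop :=
  forall (D : Type) (V V' : A -> D -> Prop), leB B V V' -> models V f -> models V' f.

Definition continuous_in (B : {set A}) (f : form) : Prop :=
  monotone_in B f /\
  forall (D : Type) (V : A -> D -> Prop), models V f ->
    exists U : A -> D -> Prop, leB_fin B U V /\ models U f.

Definition equivalent (f g : form) : Prop :=
  forall (D : Type) (V : A -> D -> Prop), models V f <-> models V g.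

Definition bigAnd (l : seq form) : form := foldr FAnd FTop l.
Definition bigOr (l : seq form) : form := foldr FOr FBot l.

Definition tau (B T : {set A}) : form :=
  FAnd (bigAnd [seq FAtom a 0 | a <- enum T])
       (bigAnd [seq FNAtom a 0 | a <- enum (~: (T :|: B))]).

Definition nablaFO (B : {set A}) (Sigma Pi : {set {set A}}) : form :=
  FAnd (bigAnd [seq FEx (tau B T) | T <- enum Sigma])
       (FAll (bigOr [seq tau B T | T <- enum Pi])).

Definition nablaPlusFO (Sigma Pi : {set {set A}}) : form := nablaFO setT Sigma Pi.

Definition SigmaMinus (B : {set A}) (Sigma : {set {set A}}) : {set {set A}} :=
  [set T in Sigma | T :&: B == set0].

End Monadic.

(* Main.v *)
Require Import Defs.
From Stdlib Require List ClassicalDescription.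
From mathcomp Require Import all_boot.
Set Implicit Arguments. Unset Strict Implicit. Unset Printing Implicit Defensive.

Lemma In_mem (T : eqType) (x : T) (s : seq T) : List.In x s <-> x \in s.
Proof.
elim: s => [|y s IH] //=; rewrite in_cons; split.
- by case=> [->|/IH ->]; rewrite ?eqxx ?orbT.
- by case/orP=> [/eqP ->|/IH]; [left|right].
Qed.

Lemma sat_bigAnd (A : finType) D (V : A -> D -> Prop) env (T : Type) (g : T -> form A) s :
  sat V env (bigAnd [seq g x | x <- s]) <-> forall x, List.In x s -> sat V env (g x).
Proof.
elim: s => [|y s IH] /=; first by split.
split.
- by case=> H1 /IH H2 x [<-|/H2].
- move=> H; split; first by apply: H; left.
  by apply/IH => x Hx; apply: H; right.
Qed.

Lemma sat_bigOr (A : finType) D (V : A -> D -> Prop) env (T : Type) (g : T -> form A) s :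
  sat V env (bigOr [seq g x | x <- s]) <-> exists x, List.In x s /\ sat V env (g x).
Proof.
elim: s => [|y s IH] /=; first by split=> // -[x []].
split.
- case=> [H|/IH [x [Hx H]]]; first by exists y; split=> //; left.
  by exists x; split=> //; right.
- case=> x [[<-|Hx] H]; [by left | right; apply/IH; by exists x].
Qed.

Definition fit (A : finType) (B : {set A}) D (V : A -> D -> Prop) (d : D) (S : {set A}) :=
  (forall a, a \in S -> V a d) /\ (forall a, a \notin S -> a \notin B -> ~ V a d).

Lemma sat_tau (A : finType) (B T : {set A}) D (V : A -> D -> Prop) d env :
  sat V (d :: env) (tau B T) <-> fit B V d T.
Proof.
rewrite /tau /= !(sat_bigAnd V (d :: env) (fun a => FAtom a 0)) /=.
rewrite !(sat_bigAnd V (d :: env) (fun a => FNAtom a 0)) /=.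
split.
- case=> H1 H2; split=> a Ha; first by apply: H1; apply/In_mem; rewrite mem_enum.
  by move=> Hb; apply: H2; apply/In_mem; rewrite mem_enum !inE negb_or Ha Hb.
- case=> H1 H2; split=> a /In_mem; rewrite mem_enum; first exact: H1.
  by rewrite !inE negb_or => /andP [Ha Hb]; apply: H2.
Qed.

Lemma sat_nabla (A : finType) (B : {set A}) Sig Pi D (V : A -> D -> Prop) :
  models V (nablaFO B Sig Pi) <->
  (forall S, S \in Sig -> exists d, fit B V d S) /\
  (forall d, exists S, S \in Pi /\ fit B V d S).
Proof.
rewrite /models /nablaFO /= (sat_bigAnd V nil (fun T => FEx (tau B T))) /=.
split.
- case=> H1 H2; split.
  + move=> S HS; have HS' : List.In S (enum Sig) by apply/In_mem; rewrite mem_enum.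
    have [d Hd] := H1 S HS'.
    by exists d; apply/(sat_tau _ _ _ _ nil).
  + move=> d; have /(sat_bigOr V [:: d] (tau B)) [S [HS H]] := H2 d.
    by exists S; split; [move/In_mem: HS; rewrite mem_enum | apply/(sat_tau _ _ _ _ nil)].
- case=> H1 H2; split.
  + move=> S /In_mem; rewrite mem_enum => /H1 [d Hd]; exists d; exact/(sat_tau _ _ _ _ nil).
  + move=> d; apply/(sat_bigOr V [:: d] (tau B)); have [S [HS H]] := H2 d.
    exists S; split; [apply/In_mem; rewrite mem_enum // | exact/(sat_tau _ _ _ _ nil)].
Qed.

Lemma nth_F2 (D D' : Type) (R : D -> D' -> Prop) env env' :
  List.Forall2 R env env' -> forall i,
  (List.nth_error env i = None /\ List.nth_error env' i = None) \/
  exists d d', List.nth_error env i = Some d /\ List.nth_error env' i = Some d' /\ R d d'.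
Proof.
elim=> [|x y l l' Hxy _ IH] i; first by left; case: i.
case: i => [|i] /=; last exact: IH.
by right; exists x, y.
Qed.

Lemma sat_bisim (A : finType) D D' (V : A -> D -> Prop) (V' : A -> D' -> Prop)
  (R : D -> D' -> Prop) :
  (forall d d', R d d' -> forall a, V a d <-> V' a d') ->
  (forall d, exists d', R d d') -> (forall d', exists d, R d d') ->
  forall f env env', List.Forall2 R env env' -> (sat V env f <-> sat V' env' f).
Proof.
move=> HR Hl Hr; elim=> [a i|a i| | |g IHg h IHh|g IHg h IHh|g IHg|g IHg] env env' HF /=.
- case: (nth_F2 HF i) => [[-> ->]|[d [d' [-> [-> H]]]]] //; exact: HR.
- case: (nth_F2 HF i) => [[-> ->]|[d [d' [-> [-> H]]]]] //.
  by have := HR _ _ H a; tauto.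
- by [].
- by [].
- by rewrite (IHg env env' HF) (IHh env env' HF).
- by rewrite (IHg env env' HF) (IHh env env' HF).
- split.
  + case=> d Hd; have [d' Hd'] := Hl d; exists d'.
    by apply/(IHg (d :: env)) => //; constructor.
  + case=> d' Hd'; have [d Hd] := Hr d'; exists d.
    by apply/(IHg (d :: env) (d' :: env')) => //; constructor.
- split.
  + move=> H d'; have [d Hd] := Hr d'.
    by apply/(IHg (d :: env)); [constructor|apply: H].
  + move=> H d; have [d' Hd'] := Hl d.
    by apply/(IHg (d :: env) (d' :: env')); [constructor|apply: H].
Qed.

Lemma models_bisim (A : finType) D D' (V : A -> D -> Prop) (V' : A -> D' -> Prop)
  (R : D -> D' -> Prop) f :
  (forall d d', R d d' -> forall a, V a d <-> V' a d') ->
  (forall d, exists d', R d d') -> (forall d', exists d, R d d') ->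
  models V f -> models V' f.
Proof.
move=> H1 H2 H3; rewrite /models => H.
by apply/(sat_bisim H1 H2 H3 f (List.Forall2_nil R)).
Qed.

Lemma list_witness (T D : Type) (P : T -> D -> Prop) (s : seq T) :
  (forall x, List.In x s -> exists d, P x d) ->
  exists l : seq D, forall x, List.In x s -> exists d, List.In d l /\ P x d.
Proof.
elim: s => [|x s IH] H; first by exists [::].
have [d Hd] := H x (or_introl erefl).
have [l Hl] := IH (fun y Hy => H y (or_intror Hy)).
exists (d :: l) => y [<-|Hy]; first by exists d; split=> //; left.
by have [e [He1 He2]] := Hl y Hy; exists e; split=> //; right.
Qed.

Lemma nabla_cont (A : finType) (B B' : {set A}) (Sig Pi : {set {set A}}) :
  B \subset B' -> (forall S, S \in Pi -> S :&: B = set0) ->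
  continuous_in B (nablaFO B' Sig Pi).
Proof.
move=> sBB' HPi; have disj : forall S a, S \in Pi -> a \in S -> a \notin B.
  move=> S a /HPi HS Ha; apply/negP => Hb.
  have : a \in S :&: B by rewrite inE Ha Hb.
  by rewrite HS inE.
split.
- move=> D V V' [Hin Heq] /sat_nabla [H1 H2]; apply/sat_nabla; split.
  + move=> S /H1 [d [Hp Hn]]; exists d; split.
    * move=> a Ha; case: (boolP (a \in B)) => Hb; first by apply: Hin; auto.
      by apply/Heq => //; auto.
    * move=> a Ha Hb'; have Hb : a \notin B.
        by apply/negP => Hb; move/negP: Hb'; apply; exact: (subsetP sBB').
      by rewrite -Heq //; apply: Hn.
  + move=> d; have [S [HS [Hp Hn]]] := H2 d; exists S; split=> //; split.
    * by move=> a Ha; apply/Heq; [exact: disj HS Ha | auto].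
    * move=> a Ha Hb'; have Hb : a \notin B.
        by apply/negP => Hb; move/negP: Hb'; apply; exact: (subsetP sBB').
      by rewrite -Heq //; apply: Hn.
- move=> D V /sat_nabla [H1 H2].
  have [l Hl] : exists l : seq D, forall S, List.In S (enum Sig) ->
       exists d, List.In d l /\ fit B' V d S.
    apply: list_witness => S /In_mem; rewrite mem_enum; exact: H1.
  exists (fun a d => if a \in B then V a d /\ List.In d l else V a d).
  split.
    split; [split|].
    + by move=> b -> d [].
    + by move=> a /negbTE ->.
    + by move=> b Hb; exists l => d; rewrite Hb => -[].
  apply/sat_nabla; split.
  + move=> S HS; have HS' : List.In S (enum Sig) by apply/In_mem; rewrite mem_enum.
    have [d [Hdl [Hp Hn]]] := Hl S HS'; exists d; split.
    * by move=> a Ha; case: (a \in B); auto.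
    * by move=> a Ha Hb; case: (a \in B) => [[Hv _]|Hv]; exact: Hn Ha Hb Hv.
  + move=> d; have [S [HS [Hp Hn]]] := H2 d; exists S; split=> //; split.
    * by move=> a Ha; rewrite (negbTE (disj S a HS Ha)); auto.
    * by move=> a Ha Hb; case: (a \in B) => [[Hv _]|Hv]; exact: Hn Ha Hb Hv.
Qed.

Definition pb (P : Prop) : bool :=
  if ClassicalDescription.excluded_middle_informative P then true else false.

Lemma pbP (P : Prop) : reflect P (pb P).
Proof. by rewrite /pb; case: ClassicalDescription.excluded_middle_informative => H; constructor. Qed.

Lemma cont_or (A : finType) (B : {set A}) (T : Type) (g : T -> form A) s :
  (forall x, continuous_in B (g x)) -> continuous_in B (bigOr [seq g x | x <- s]).
Proof.
move=> Hg; split.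
- move=> D V V' HV /(sat_bigOr V nil g) [x [Hx H]]; apply/(sat_bigOr V' nil g).
  by exists x; split=> //; apply: (proj1 (Hg x)) HV H.
- move=> D V /(sat_bigOr V nil g) [x [Hx H]].
  have [U [HU HUx]] := proj2 (Hg x) D V H; exists U; split=> //.
  by apply/(sat_bigOr U nil g); exists x.
Qed.

Lemma cont_equiv (A : finType) (B : {set A}) (f g : form A) :
  equivalent f g -> continuous_in B g -> continuous_in B f.
Proof.
move=> E [Hm Hc]; split.
- by move=> D V V' HV /E H; apply/E; apply: Hm HV H.
- by move=> D V /E /Hc [U [HU HUg]]; exists U; split=> //; apply/E.
Qed.

Definition realizes (A : finType) D (U : A -> D -> Prop) (Sig : {set {set A}}) :=
  (forall e, exists S, S \in Sig /\ forall a, U a e <-> a \in S) /\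
  (forall S, S \in Sig -> exists e, forall a, U a e <-> a \in S).

Lemma key (A : finType) (B B' : {set A}) (phi : form A) (Sig : {set {set A}}) D (U : A -> D -> Prop) :
  monotone_in B' phi -> models U phi -> realizes U Sig ->
  forall DW (W : A -> DW -> Prop), models W (nablaFO B' Sig (SigmaMinus B Sig)) -> models W phi.
Proof.
move=> Hmon HU [R1 R2] DW W /sat_nabla [H1 H2].
pose X := {p : DW * {set A} | p.2 \in Sig /\ fit B' W p.1 p.2}.
pose N := fun a (p : X) => a \in (sval p).2.
pose W2 := fun a (p : X) => W a (sval p).1.
have HN : models N phi.
  apply: (models_bisim (R := fun e p => forall a, U a e <-> N a p)) HU.
  - by [].
  - move=> e; have [S [HS HSe]] := R1 e; have [w Hw] := H1 S HS.
    by exists (exist _ (w, S) (conj HS Hw)).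
  - case=> [[w S] [HS Hw]]; have [e He] := R2 S HS; by exists e.
have HW2 : models W2 phi.
  apply: Hmon HN; split.
  - by move=> b _ [[w S] [HS [Hp Hn]]] /=; rewrite /N /W2 /=; apply: Hp.
  - move=> a Ha [[w S] [HS [Hp Hn]]] /=; rewrite /N /W2 /=; split; first exact: Hp.
    by move=> Hw; case: (boolP (a \in S)) => // HaS; case: (Hn a HaS Ha Hw).
apply: (models_bisim (R := fun p w => (sval p).1 = w)) HW2.
- by move=> p w <- a.
- by move=> p; exists (sval p).1.
- move=> w; have [S [HS Hw]] := H2 w.
  have HS' : S \in Sig by move: HS; rewrite inE => /andP [].
  by exists (exist _ (w, S) (conj HS' Hw)).
Qed.

Lemma In_sumn (T : Type) (f : T -> nat) x s : List.In x s -> f x <= sumn (map f s).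
Proof.
elim: s => [|y s IH] //= [<-|/IH H]; first exact: leq_addr.
by apply: leq_trans H _; apply: leq_addl.
Qed.

Lemma main_dir (A : finType) (B B' : {set A}) (phi : form A) :
  B \subset B' -> monotone_in B' phi -> continuous_in B phi ->
  exists F : {set {set {set A}}},
    equivalent phi (bigOr [seq nablaFO B' Sig (SigmaMinus B Sig) | Sig <- enum F]).
Proof.
move=> sBB' Hmon [_ Hcont].
pose F := [set Sig : {set {set A}} | pb (forall D (W : A -> D -> Prop),
   models W (nablaFO B' Sig (SigmaMinus B Sig)) -> models W phi)].
exists F => D V; split; last first.
  move/(sat_bigOr V nil (fun Sig => nablaFO B' Sig (SigmaMinus B Sig))) => [Sig [HS H]].
  move/In_mem: HS; rewrite mem_enum inE => /pbP; exact.
move=> HV.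
pose V' := fun a (p : D * nat) => V a p.1.
have HV' : models V' phi.
  apply: (models_bisim (R := fun d (p : D * nat) => p.1 = d)) HV.
  - by move=> d p <-.
  - by move=> d; exists (d, 0).
  - by move=> p; exists p.1.
have [U [[[Hin Heq] Hfin] HU]] := Hcont _ V' HV'.
pose Sig := [set S : {set A} | pb (exists e, forall a, U a e <-> a \in S)].
have Hreal : realizes U Sig.
  split.
  - move=> e; exists [set a | pb (U a e)]; split.
    + rewrite inE; apply/pbP; exists e => a; rewrite inE; split; [by move/pbP|by move/pbP].
    + by move=> a; rewrite inE; split; [move/pbP|move/pbP].
  - by move=> S; rewrite inE => /pbP.
have HSF : Sig \in F.
  rewrite inE; apply/pbP => DW W; exact: (@key A B B' phi Sig _ U Hmon HU Hreal DW W).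
have [ls Hls] : exists ls : seq (seq (D * nat)), forall b, List.In b (enum B) ->
     exists l, List.In l ls /\ forall x, U b x -> List.In x l.
  apply: list_witness => b /In_mem; rewrite mem_enum => /Hfin [l Hl]; by exists l.
pose M := sumn (map (fun l => sumn (map snd l)) ls).
have Hfresh : forall d b, b \in B -> ~ U b (d, M.+1).
  move=> d b Hb HUb.
  have Hb' : List.In b (enum B) by apply/In_mem; rewrite mem_enum.
  have [l [Hl Hl']] := Hls b Hb'; have := Hl' _ HUb.
  move=> /(In_sumn snd) H1; have H2 := In_sumn (fun l => sumn (map snd l)) Hl.
  by have := leq_trans H1 H2; rewrite /= ltnn.
have HUn : models U (nablaFO B' Sig (SigmaMinus B Sig)).
  apply/sat_nabla; split.
  - move=> S; rewrite inE => /pbP [e He]; exists e; split.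
    + by move=> a /He.
    + by move=> a Ha _ /He; rewrite (negbTE Ha).
  - case=> d n.
    pose S0 := [set a | (a \notin B) && pb (U a (d, n))].
    exists S0; split.
    + rewrite inE; apply/andP; split.
      * rewrite inE; apply/pbP; exists (d, M.+1) => a; rewrite inE.
        case: (boolP (a \in B)) => Hb /=.
        -- by split=> // H; case: (Hfresh d a Hb H).
        -- have E1 := Heq a Hb (d, M.+1); have E2 := Heq a Hb (d, n).
           rewrite /V' /= in E1 E2; split.
           ++ by move=> H; apply/pbP; apply/E2; apply/E1.
           ++ by move/pbP => H; apply/E1; apply/E2.
      * apply/eqP/setP => a; rewrite !inE.
        by case: (a \in B); rewrite ?andbF ?andbT.
    + split.
      * by move=> a; rewrite inE => /andP [_ /pbP].
      * move=> a; rewrite inE negb_and negbK => Ha Hb' HUa.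
        have Hb : a \notin B by apply/negP => Hb; move/negP: Hb'; apply; exact: (subsetP sBB').
        by move: Ha; rewrite (negbTE Hb) /= => /negP; apply; apply/pbP.
have HSm : forall S, S \in SigmaMinus B Sig -> S :&: B = set0.
  by move=> S; rewrite inE => /andP [_ /eqP].
have HV'n := proj1 (nabla_cont Sig sBB' HSm) _ U V' (conj Hin Heq) HUn.
have HVn : models V (nablaFO B' Sig (SigmaMinus B Sig)).
  apply: (models_bisim (R := fun (p : D * nat) d => p.1 = d)) HV'n.
  - by move=> p d <-.
  - by move=> p; exists p.1.
  - by move=> d; exists (d, 0).
apply/(sat_bigOr V nil (fun Sig => nablaFO B' Sig (SigmaMinus B Sig))).
exists Sig; split=> //; apply/In_mem; rewrite mem_enum //.
Qed.

Theorem corollary5p7 (A : finType) (phi : form A) (B : {set A}) :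
  sentence phi ->
  (continuous_in B phi <->
     exists F : {set {set {set A}}},
       equivalent phi (bigOr [seq nablaFO B Sigma (SigmaMinus B Sigma) | Sigma <- enum F]))
  /\
  (monotone_in setT phi ->
     (continuous_in B phi <->
        exists F : {set {set {set A}}},
          equivalent phi (bigOr [seq nablaPlusFO Sigma (SigmaMinus B Sigma) | Sigma <- enum F]))).
Proof.
move=> _; have HSm : forall Sig : {set {set A}}, forall S, S \in SigmaMinus B Sig -> S :&: B = set0.
  by move=> Sig S; rewrite inE => /andP [_ /eqP].
split.
- split.
  + move=> Hc; exact: (main_dir (subxx B) (proj1 Hc) Hc).
  + case=> F E; apply: (@cont_equiv _ B _ _ E); apply: cont_or => Sig.
    exact: (nabla_cont Sig (subxx B) (HSm Sig)).
- move=> Hmon; split.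
  + move=> Hc; exact: (main_dir (subsetT B) Hmon Hc).
  + case=> F E; apply: (@cont_equiv _ B _ _ E); apply: cont_or => Sig.
    exact: (nabla_cont Sig (subsetT B) (HSm Sig)).
Qed.
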